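(* Let $\mathcal{G}=(\mathcal{V},\mathcal{R},\mathcal{E})$ be a knowledge graph, let $s\in\mathcal{V}$ be a source node, $q\in\mathcal{R}$ a query relation, and $\delta\ge 0$ an integer offset. Let $\mathbf{x}_q^{(t)}(s,o)$, $t\ge 0$, $o\in\mathcal{V}$, be computed by the truncated generalized Bellman–Ford recursion described in the context, and let $\mathbf{x}_q^F(s,o)=\mathbf{x}_q^{(\mathrm{dist}(s,o)+\delta)}(s,o)$ be the final representation. Then for every $o\in\mathcal{V}$ (with $\mathrm{dist}(s,o)<\infty$), the final representation $\mathbf{x}_q^F(s,o)$ aggregates exactly the path representations of all paths from $s$ to $o$ whose length lies between $\mathrm{dist}(s,o)$ and $\mathrm{dist}(s,o)+\delta$, and no others; that is, $$\mathbf{x}_q^F(s,o)=\bigoplus_{t=\mathrm{dist}(s,o)}^{\mathrm{dist}(s,o)+\delta}\ \bigoplus_{p\in P_{s,o}^t}\ \bigotimes_{i=1}^{|p|} w(e_i).$$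
   Context: A knowledge graph is $\mathcal{G}=(\mathcal{V},\mathcal{R},\mathcal{E})$ with entity set $\mathcal{V}$, relation set $\mathcal{R}$, and edge set $\mathcal{E}$ of triples $(u,r,v)$ with $u,v\in\mathcal{V}$, $r\in\mathcal{R}$, regarded as a directed edge from $u$ to $v$. For $o\in\mathcal{V}$, $\mathcal{E}(o)$ denotes the set of edges of the form $(v,r,o)$ (edges with $o$ as object). All edges have weight 1, and $\mathrm{dist}(s,o)$ is the shortest path distance (number of edges) from $s$ to $o$. For an integer $t\ge 0$, $P^t_{s,o}$ denotes the set of paths (in the loose sense of walks, repeated nodes and edges allowed) of length $t$ from $s$ to $o$; for a path $p=(e_1,\dots,e_{|p|})$, $w(e_i)=\mathbf{w}_q(e_i)$ is the representation of edge $e_i$ conditioned on $q$. The operations $\oplus$ (summation/aggregation) and $\otimes$ (multiplication) are those of the semiring used in the generalized Bellman–Ford algorithm, and $\mathbf{1}_q(s=o)$ denotes the multiplicative identity of the semiring if $s=o$ and the additive identity otherwise. Truncated Bellman–Ford recursion: set $\mathbf{x}_q^{(0)}(s,o)=\mathbf{1}_q(s=o)$. For $t\ge 1$ define the constrained edge set $$\mathcal{C}(s,o,t)=\begin{cases}\emptyset, & \text{if } t<\mathrm{dist}(s,o)\text{ or } t>\mathrm{dist}(s,o)+\delta,\\ \{(v,r,o)\in\mathcal{E}(o)\,:\,\mathrm{dist}(s,v)<\mathrm{dist}(s,o)+\delta\}, & \text{otherwise.}\end{cases}$$ For $t\ge 1$: if $\mathrm{dist}(s,o)\le t\le \mathrm{dist}(s,o)+\delta$,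 then $$\mathbf{x}_q^{(t)}(s,o)=\Big(\bigoplus_{(v,r,o)\in\mathcal{C}(s,o,t)}\mathbf{x}_q^{(t-1)}(s,v)\otimes \mathbf{w}_q(v,r,o)\Big)\oplus \mathbf{x}_q^{(0)}(s,o);$$ otherwise node $o$ is not updated at iteration $t$, i.e. $\mathbf{x}_q^{(t)}(s,o)=\mathbf{x}_q^{(t-1)}(s,o)$. The final representation of the pair is $\mathbf{x}_q^F(s,o)=\mathbf{x}_q^{(\mathrm{dist}(s,o)+\delta)}(s,o)$. *)

(* Defs.v *)
From mathcomp Require Import all_boot all_algebra.
From Stdlib Require Import ClassicalEpsilon.
Set Implicit Arguments. Unset Strict Implicit. Unset Printing Implicit Defensive.
Import GRing.Theory.
Local Open Scope ring_scope.

(* Knowledge graph: entities V (finite), relations R (finite), edge set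
   E : {set V * R * V}; an edge ((u, r), v) is the triple (u, r, v),
   a directed edge from u to v. *)

Section KG.
Variables (V Rl : finType) (E : {set V * Rl * V}).

(* [is_walk u o p] : the edge list p = (e_1, ..., e_n) is a walk (path in the
   loose sense) in the graph from u to o. *)
Fixpoint is_walk (u o : V) (p : seq (V * Rl * V)) : bool :=
  match p with
  | [::] => u == o
  | e :: p' => [&& e \in E, e.1.1 == u & is_walk e.2 o p']
  end.

Definition walk_of_length (s o : V) (n : nat) : bool :=
  [exists p : n.-tuple (V * Rl * V), is_walk s o p].

(* shortest path distance; None encodes dist = +infinity (unreachable) *)
Definition dist (s o : V) : option nat :=
  match excluded_middle_informative (exists n, walk_of_length s o n) with
  | left H => Some (ex_minn H)
  | right _ => None
  end.

(* "dist s v < n" with the convention +infinity < n is false *)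
Definition dist_lt (s v : V) (n : nat) : bool :=
  if dist s v is Some d then (d < n)%N else false.

Variables (S : pzSemiRingType) (w : V * Rl * V -> S) (s : V) (delta : nat).

Definition x0 (o : V) : S := if s == o then 1 else 0.

Fixpoint xBF (t : nat) : V -> S :=
  match t with
  | 0 => x0
  | t'.+1 => fun o =>
      match dist s o with
      | Some d =>
          if (d <= t'.+1 <= d + delta)%N then
            (\sum_(e in E | (e.2 == o) && dist_lt s e.1.1 (d + delta))
                xBF t' e.1.1 * w e) + x0 o
          else xBF t' o
      | None => xBF t' o
      end
  end.

End KG.

(* Main.v *)
Require Import Defs.
From mathcomp Require Import all_boot all_algebra.
From Stdlib Require Import ClassicalEpsilon.
From mathcomp Require Import zify.
Set Implicit Arguments. Unset Strict Implicit. Unset Printing Implicit Defensive.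
Import GRing.Theory.
Local Open Scope ring_scope.

Section Aux.
Variables (V Rl : finType) (E : {set V * Rl * V}) (S : pzSemiRingType)
  (w : V * Rl * V -> S).
Local Notation X := (V * Rl * V)%type.

Lemma sum_tuple0 (F : seq X -> S) : \sum_(p : 0.-tuple X) F p = F [::].
Proof.
by rewrite (big_pred1 [tuple]) // => p; rewrite [p]tuple0 /=; apply/esym/eqP.
Qed.

Lemma sum_tupleS n (F : seq X -> S) :
  \sum_(p : n.+1.-tuple X) F p = \sum_(x : X) \sum_(p : n.-tuple X) F (x :: p).
Proof.
rewrite (reindex (fun xp : X * n.-tuple X => [tuple of xp.1 :: xp.2])) /=.
  by rewrite -(pair_bigA _ (fun x (p : n.-tuple X) => F (x :: p))).
exists (fun p : n.+1.-tuple X => (thead p, [tuple of behead p])) => [[x p] _|p _] /=.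
  by congr pair; apply: val_inj.
by rewrite [in RHS](tuple_eta p); apply: val_inj.
Qed.

Definition W u v n : S :=
  \sum_(p : n.-tuple X) if is_walk E u v p then \prod_(e <- p) w e else 0.

Lemma W0 u v : W u v 0 = if u == v then 1 else 0.
Proof. by rewrite /W (sum_tuple0 (fun p => if is_walk E u v p then \prod_(e <- p) w e else 0)) /= big_nil. Qed.

Lemma WS u v n : W u v n.+1 = \sum_(x in E | x.1.1 == u) w x * W x.2 v n.
Proof.
rewrite /W (@sum_tupleS n (fun p => if is_walk E u v p then \prod_(e <- p) w e else 0)) [RHS]big_mkcond /=.
apply: eq_bigr => x _.

case: (x \in E) => /=; last by rewrite big1.
case: (x.1.1 == u) => /=; last by rewrite big1.
rewrite mulr_sumr; apply: eq_bigr => p _.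
by case: is_walk; rewrite ?big_cons ?mulr0.
Qed.

Lemma Wback n u o : W u o n.+1 = \sum_(e in E | e.2 == o) W u e.1.1 n * w e.
Proof.
elim: n u => [|n IH] u.
  rewrite WS big_mkcond [RHS]big_mkcond /=; apply: eq_bigr => e _.
  rewrite !W0; case: (e \in E) => //=.
  rewrite [u == _]eq_sym; case: (e.1.1 == u); case: (e.2 == o);
    by rewrite ?mul1r ?mulr1 ?mul0r ?mulr0.
rewrite WS.
under eq_bigr do rewrite IH mulr_sumr.
rewrite exchange_big /=; apply: eq_bigr => e _.
rewrite WS mulr_suml; apply: eq_bigr => x _.
by rewrite mulrA.
Qed.

Lemma is_walk_rcons u o p e :
  is_walk E u o (rcons p e) = [&& is_walk E u e.1.1 p, e \in E & e.2 == o].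
Proof.
elim: p u => [|x p IH] u /=.
  by rewrite [u == _]eq_sym; case: (e \in E); case: (e.1.1 == u).
by rewrite IH !andbA.
Qed.

Lemma dist_spec s v d : dist E s v = Some d ->
  walk_of_length E s v d /\ forall n, walk_of_length E s v n -> (d <= n)%N.
Proof.
rewrite /dist; case: excluded_middle_informative => // H [<-].
by case: ex_minnP.
Qed.

Lemma dist_some s v n : walk_of_length E s v n ->
  exists d, dist E s v = Some d /\ (d <= n)%N.
Proof.
move=> Hw; rewrite /dist; case: excluded_middle_informative => [H|nH].
  by exists (ex_minn H); split=> //; case: ex_minnP => m _; apply.
by exfalso; apply: nH; exists n.
Qed.

Lemma W_zero s v n : (forall d, dist E s v = Some d -> (n < d)%N) -> W s v n = 0.
Proof.
move=> Hd; rewrite /W big1 // => p _; case: ifP => // Hw.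
have [d [Hs Hle]] : exists d, dist E s v = Some d /\ (d <= n)%N.
  by apply: dist_some; apply/existsP; exists p.
by have := Hd _ Hs; rewrite ltnNge Hle.
Qed.

Lemma dist_ss s : dist E s s = Some 0%N.
Proof.
have [d [-> Hd]] : exists d, dist E s s = Some d /\ (d <= 0)%N.
  by apply: dist_some; apply/existsP; exists [tuple]; rewrite /= eqxx.
by move: Hd; rewrite leqn0 => /eqP ->.
Qed.

Lemma dist_edge s v dv e d : dist E s v = Some dv -> e \in E -> e.1.1 = v ->
  dist E s e.2 = Some d -> (d <= dv.+1)%N.
Proof.
move=> /dist_spec [/existsP [p Hp] _] He Hv /dist_spec [_ Hmin].
apply: Hmin; apply/existsP; exists [tuple of rcons p e].
by rewrite /= is_walk_rcons Hv Hp He eqxx.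
Qed.

Variables (s : V) (delta : nat).

Lemma xBF_none t v : dist E s v = None -> xBF E w s delta t v = 0.
Proof.
move=> Hn; elim: t => [|t IH] /=; last by rewrite Hn.
rewrite /x0; case: eqP => // Esv.
by move: Hn; rewrite -Esv dist_ss.
Qed.

Lemma inv t v dv : dist E s v = Some dv ->
  xBF E w s delta t v = \sum_(i < (minn t (dv + delta)%N).+1) W s v i.
Proof.
elim: t v dv => [|t IH] o d Hd.
  by rewrite /= min0n big_ord_recl big_ord0 addr0 W0.
rewrite /= Hd; case: ifP => [/andP [h1 h2] | hn].
  have -> : minn t.+1 (d + delta)%N = t.+1 by lia.
  rewrite big_ord_recl W0 addrC /x0; congr (_ + _).
  under [RHS]eq_bigr => i _ do rewrite lift0 Wback.
  rewrite exchange_big /= [LHS]big_mkcond [RHS]big_mkcond /=.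
  apply: eq_bigr => e _.
  case He: (e \in E) => //=; case: (e.2 =P o) => //= Ho.
  rewrite -mulr_suml /dist_lt.
  case Hv: (dist E s e.1.1) => [dv|]; last first.
    by rewrite big1 ?mul0r // => i _; apply: W_zero => d'; rewrite Hv.
  have Hle := dist_edge Hv He erefl (etrans (congr1 _ Ho) Hd).
  rewrite (IH _ _ Hv).
  have -> : minn t (dv + delta) = t by lia.
  case: ifP => // /negbT; rewrite -leqNgt => Hge.
  rewrite big1 ?mul0r // => i _; apply: W_zero => d'; rewrite Hv => -[<-].
  have := ltn_ord i; lia.
rewrite (IH _ _ Hd).
have [le|lt] := leqP (d + delta) t.
  have -> : minn t.+1 (d + delta)%N = (d + delta)%N by lia.
  by [].
have -> : minn t.+1 (d + delta)%N = t.+1 by lia.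
rewrite [RHS]big_ord_recr /= W_zero ?addr0 // => d'; rewrite Hd => -[<-].
move/negbT: hn; rewrite negb_and -!ltnNge => /orP [] ?; lia.
Qed.

End Aux.

Theorem theorem1 (V Rl : finType) (E : {set V * Rl * V}) (S : pzSemiRingType)
    (wq : Rl -> V * Rl * V -> S) (s : V) (q : Rl) (delta : nat)
    (o : V) (d : nat) :
  dist E s o = Some d ->
  xBF E (wq q) s delta (d + delta) o =
  \sum_(d <= t < (d + delta).+1)
     \sum_(p : t.-tuple (V * Rl * V) | is_walk E s o p)
        \prod_(e <- p) wq q e.
Proof.
move=> Hd; rewrite (inv (wq q) delta (d + delta) Hd) minnn.
rewrite -(big_mkord xpredT (fun i => W E (wq q) s o i)).
rewrite (@big_cat_nat _ _ _ d 0 (d + delta).+1 _ _ (leq0n d) (leqW (leq_addr _ _))) /=.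
rewrite [X in X + _]big_nat big1 ?add0r; last first.
  move=> i /andP [_ hi]; apply: W_zero => d'; rewrite Hd => -[<-] //.
under eq_bigr => i _ do rewrite /W -big_mkcond.
by [].
Qed.
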